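(* Let $\mathbb{F}$ be a finite field, $G\subseteq\mathbb{F}$, $m,k\in\mathbb{N}$, and $d,d'\in\mathbb{N}$ with $d'\ge 2(|G|-1)$. Suppose $S\subseteq\mathbb{F}^{m+k}$ is such that there exist coefficients $(c_{\vec\alpha})_{\vec\alpha\in\mathbb{F}^m}$ and $(d_{\vec q})_{\vec q\in S}$ in $\mathbb{F}$ with (i) for all $Z\in\mathbb{F}^{\le d,\le d'}[X_1,\dots,X_m,Y_1,\dots,Y_k]$: $\sum_{\vec\alpha\in\mathbb{F}^m}c_{\vec\alpha}\sum_{\vec y\in G^k}Z(\vec\alpha,\vec y)=\sum_{\vec q\in S}d_{\vec q}Z(\vec q)$, and (ii) there exists $Z'\in\mathbb{F}^{\le d,\le d'}[X_1,\dots,X_m,Y_1,\dots,Y_k]$ with $\sum_{\vec\alpha\in\mathbb{F}^m}c_{\vec\alpha}\sum_{\vec y\in G^k}Z'(\vec\alpha,\vec y)\ne 0$. Then $|S|\ge|G|^k$.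
   Context: $\mathbb{F}^{\le d,\le d'}[X_1,\dots,X_m,Y_1,\dots,Y_k]$ denotes the set of $(m+k)$-variate polynomials over $\mathbb{F}$ of individual degree at most $d$ in each of $X_1,\dots,X_m$ and at most $d'$ in each of $Y_1,\dots,Y_k$. *)

(* Defs.v *)
From HB Require Import structures.
From mathcomp Require Import all_boot all_order all_algebra all_fingroup all_field.
Set Implicit Arguments. Unset Strict Implicit. Unset Printing Implicit Defensive.
Import GRing.Theory.
Local Open Scope ring_scope.

(* Exponent vectors of monomials of F^{<=d,<=d'}[X_1..X_m,Y_1..Y_k]:
   exponent of X_i in {0..d}, exponent of Y_j in {0..d'}. *)
Definition iexps (m k d d' : nat) : finType :=
  ({ffun 'I_m -> 'I_d.+1} * {ffun 'I_k -> 'I_d'.+1})%type.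

Definition ipoly (F : fieldType) (m k d d' : nat) := iexps m k d d' -> F.

Definition peval (F : fieldType) (m k d d' : nat) (Z : ipoly F m k d d')
  (x : 'rV[F]_(m + k)) : F :=
  \sum_(e : iexps m k d d')
     Z e * (\prod_(i < m) x ord0 (lshift k i) ^+ e.1 i)
         * (\prod_(j < k) x ord0 (rshift m j) ^+ e.2 j).

Definition Gsum (F : finFieldType) (G : {set F}) (m k d d' : nat)
  (Z : ipoly F m k d d') (alpha : 'rV[F]_m) : F :=
  \sum_(y : 'rV[F]_k | [forall j, y ord0 j \in G]) peval Z (row_mx alpha y).

(* Main.v *)
Require Import Defs.
From HB Require Import structures.
From mathcomp Require Import all_boot all_order all_algebra all_fingroup all_field.
From mathcomp Require Import ring zify.
Set Implicit Arguments. Unset Strict Implicit. Unset Printing Implicit Defensive.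
Import GRing.Theory.
Local Open Scope ring_scope.

Definition Xev (F : fieldType) (m d : nat) (W : {ffun 'I_m -> 'I_d.+1} -> F)
  (a : 'rV[F]_m) : F := \sum_(ex : {ffun 'I_m -> 'I_d.+1}) W ex * \prod_(i < m) a ord0 i ^+ ex i.

Lemma peval_prod (F : fieldType) (m k d d' : nat) (W : {ffun 'I_m -> 'I_d.+1} -> F)
  (P : 'I_k -> {poly F}) (hP : forall j, (size (P j) <= d'.+1)%N) (x : 'rV[F]_(m + k)) :
  peval (fun e : iexps m k d d' => W e.1 * \prod_j (P j)`_(e.2 j)) x
  = Xev W (lsubmx x) * \prod_j (P j).[x ord0 (rshift m j)].
Proof.
have E j : (P j).[x ord0 (rshift m j)] = \sum_(i < d'.+1) (P j)`_i * x ord0 (rshift m j) ^+ i.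
  exact: horner_coef_wide.
rewrite (eq_bigr _ (fun j _ => E j)) bigA_distr_bigA /Xev big_distrl /=.
under eq_bigr do rewrite big_distrr /=.
rewrite pair_bigA /peval; apply: eq_bigr => -[ex ey] _ /=.
rewrite big_split /=.
idtac.
have -> : \prod_(i < m) lsubmx x ord0 i ^+ ex i = \prod_(i < m) x ord0 (lshift k i) ^+ ex i by apply: eq_bigr => i _; rewrite /lsubmx mxE.
ring.
Qed.

Lemma peval_exp (F : fieldType) (m k d d' : nat) (Z : ipoly F m k d d') (al : 'rV[F]_m) (y : 'rV[F]_k) :
  peval Z (row_mx al y) = Xev (fun ex => \sum_(ey : {ffun 'I_k -> 'I_d'.+1}) Z (ex, ey) * \prod_j y ord0 j ^+ ey j) al.
Proof.
rewrite /Xev; under eq_bigr do rewrite big_distrl /=.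
rewrite pair_bigA /peval; apply: eq_bigr => -[ex ey] _ /=.
under eq_bigr do rewrite row_mxEl.
under [X in _ * _ * X = _]eq_bigr do rewrite row_mxEr.
ring.
Qed.

Definition gg (F : finFieldType) (G : {set F}) (i : 'I_#|G|) : F := enum_val i.

Definition lag (F : finFieldType) (G : {set F}) (i : 'I_#|G|) : {poly F} :=
  (\prod_(x <- rem (gg i) (enum G)) (gg i - x))^-1 *: \prod_(x <- rem (gg i) (enum G)) ('X - x%:P).

Lemma gg_in (F : finFieldType) (G : {set F}) (i : 'I_#|G|) : gg i \in G.
Proof. exact: enum_valP. Qed.

Lemma gg_eq (F : finFieldType) (G : {set F}) (i j : 'I_#|G|) : (gg i == gg j) = (i == j).
Proof. by rewrite (inj_eq enum_val_inj). Qed.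

Lemma lag_size (F : finFieldType) (G : {set F}) (i : 'I_#|G|) : (size (lag i) <= #|G|)%N.
Proof.
apply: leq_trans (size_scale_leq _ _) _.
rewrite size_prod_XsubC size_rem ?mem_enum ?gg_in // -cardE.
by case: #|G| i => [[]|n].
Qed.

Lemma lag_eval (F : finFieldType) (G : {set F}) (i : 'I_#|G|) (t : F) : t \in G ->
  (lag i).[t] = (t == gg i)%:R.
Proof.
move=> tG; rewrite hornerZ horner_prod.
under [X in _ * X]eq_bigr do rewrite hornerXsubC.
case: eqP => [->|ne].
  rewrite mulVf //; rewrite prodf_seq_eq0; apply/hasPn => x.
  by rewrite mem_rem_uniq ?enum_uniq // inE subr_eq0 eq_sym => /andP[].
apply/eqP; rewrite mulf_eq0 prodf_seq_eq0; apply/orP; right; apply/hasP; exists t.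
  by rewrite mem_rem_uniq ?enum_uniq // inE mem_enum tG andbT; apply/eqP.
by rewrite subrr eqxx.
Qed.

Definition pt (F : finFieldType) (G : {set F}) (k : nat) (a : {ffun 'I_k -> 'I_#|G|}) : 'rV[F]_k :=
  \row_j gg (a j).
Definition ymon (F : fieldType) (k n : nat) (e : {ffun 'I_k -> 'I_n}) (y : 'rV[F]_k) : F :=
  \prod_j y ord0 j ^+ e j.
Definition dlt (F : finFieldType) (G : {set F}) (k : nat) (a : {ffun 'I_k -> 'I_#|G|}) (y : 'rV[F]_k) : F :=
  \prod_j (lag (a j)).[y ord0 j].

Lemma pt_in (F : finFieldType) (G : {set F}) (k : nat) (a : {ffun 'I_k -> 'I_#|G|}) :
  [forall j, pt a ord0 j \in G].
Proof. by apply/forallP => j; rewrite mxE gg_in. Qed.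

Lemma dlt_pt (F : finFieldType) (G : {set F}) (k : nat) (a a' : {ffun 'I_k -> 'I_#|G|}) :
  dlt a' (pt a) = (a == a')%:R.
Proof.
rewrite /dlt; under eq_bigr do rewrite mxE lag_eval ?gg_in // gg_eq.
case: eqP => [->|ne].
  by rewrite big1 // => j _; rewrite eqxx.
have [j hj] : exists j, a j != a' j.
  apply/existsP; rewrite -negb_forall; apply/negP => /forallP h; apply: ne.
  by apply/ffunP => j; apply/eqP.
by rewrite (bigD1 j) //= (negbTE hj) mul0r.
Qed.

Lemma dlt_G (F : finFieldType) (G : {set F}) (k : nat) (a : {ffun 'I_k -> 'I_#|G|}) (y : 'rV[F]_k) :
  [forall j, y ord0 j \in G] -> y != pt a -> dlt a y = 0.
Proof.
move=> /forallP yG ne.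
have [j hj] : exists j, y ord0 j != pt a ord0 j.
  apply/existsP; rewrite -negb_forall; apply/negP => /forallP h; move/eqP: ne; apply.
  by apply/rowP => j; apply/eqP; rewrite [X in _ == X]/= (eqP (h j)).
move: hj; rewrite mxE => hj.
by rewrite /dlt (bigD1 j) //= lag_eval // (negbTE hj) mul0r.
Qed.

Lemma sum_dlt (F : finFieldType) (G : {set F}) (k : nat) (a : {ffun 'I_k -> 'I_#|G|}) (y : 'rV[F]_k) :
  \sum_(e : {ffun 'I_k -> 'I_#|G|}) ymon e y * \prod_j (lag (a j))`_(e j) = dlt a y.
Proof.
rewrite /dlt.
have E j : (lag (a j)).[y ord0 j] = \sum_(i < #|G|) (lag (a j))`_i * y ord0 j ^+ i.
  exact/horner_coef_wide/lag_size.
rewrite (eq_bigr _ (fun j _ => E j)) bigA_distr_bigA; apply: eq_bigr => e _.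
by rewrite /ymon -big_split /=; apply: eq_bigr => j _; rewrite mulrC.
Qed.

Lemma key (F : finFieldType) (G : {set F}) (m k d d' : nat) (hd' : (2 * (#|G| - 1) <= d')%N)
  (S : {set 'rV[F]_(m + k)}) (c : 'rV[F]_m -> F) (dq : 'rV[F]_(m + k) -> F)
  (hi : forall Z : ipoly F m k d d',
        \sum_(alpha : 'rV[F]_m) c alpha * Gsum G Z alpha = \sum_(q in S) dq q * peval Z q)
  (W : {ffun 'I_m -> 'I_d.+1} -> F) (hW : \sum_(al : 'rV[F]_m) c al * Xev W al != 0) :
  (#|G| ^ k <= #|S|)%N.
Proof.
set AW := \sum_(al : 'rV[F]_m) c al * Xev W al in hW.
pose J := {ffun 'I_k -> 'I_#|G|}.
have hkey : forall a e : J, ymon e (pt a) = \sum_(q in S)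
    AW^-1 * (dq q * Xev W (lsubmx q) * dlt a (rsubmx q)) * ymon e (rsubmx q).
  move=> a e.
  pose P j := lag (a j) * 'X^(e j).
  have hP j : (size (P j) <= d'.+1)%N.
    apply: leq_trans (size_mul_leq _ _) _; rewrite size_polyXn.
    have := lag_size (a j); have := ltn_ord (e j); lia.
  have hPev (x : 'rV[F]_(m + k)) : \prod_j (P j).[x ord0 (rshift m j)] = dlt a (rsubmx x) * ymon e (rsubmx x).
    by rewrite /dlt /ymon -big_split; apply: eq_bigr => j _; rewrite hornerM hornerXn /rsubmx !mxE.
  pose Z := (fun e' : iexps m k d d' => W e'.1 * \prod_j (P j)`_(e'.2 j)).
  have hpe x : peval Z x = Xev W (lsubmx x) * (dlt a (rsubmx x) * ymon e (rsubmx x)).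
    by rewrite peval_prod // hPev.
  have hG al : Gsum G Z al = Xev W al * ymon e (pt a).
    rewrite /Gsum (bigD1 (pt a)) ?pt_in //= big1 ?addr0 => [|y /andP[yG ne]];
      rewrite hpe row_mxKl row_mxKr.
      by rewrite dlt_pt eqxx mul1r.
    by rewrite (dlt_G yG ne) mul0r mulr0.
  have := hi Z; under eq_bigr do rewrite hG.
  under eq_bigr do rewrite mulrA.
  rewrite -big_distrl /= -/AW => h.
  apply: (mulfI hW); rewrite h big_distrr /=; apply: eq_bigr => q _.
  rewrite hpe !mulrA mulfV // mul1r; ring.
pose N := #|J|.
pose ej (r : 'I_N) : J := enum_val r.
pose MG := \matrix_(r < N, c < N) ymon (ej c) (pt (ej r)).
pose MS := \matrix_(s < #|S|, c < N) ymon (ej c) (rsubmx (enum_val s : 'rV[F]_(m + k))).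
pose C := \matrix_(r < N, s < #|S|)
  (AW^-1 * (dq (enum_val s) * Xev W (lsubmx (enum_val s : 'rV[F]_(m + k))) * dlt (ej r) (rsubmx (enum_val s : 'rV[F]_(m + k))))).
have eM : MG = C *m MS.
  apply/matrixP => r c'; rewrite !mxE hkey big_enum_val; apply: eq_bigr => s _; rewrite !mxE.
  done.
pose D := \matrix_(c' < N, r < N) \prod_j (lag (ej r j))`_(ej c' j).
have eI : MG *m D = 1%:M.
  apply/matrixP => r r'; rewrite !mxE.
  rewrite (reindex (@enum_rank J)) /=; last by apply: onW_bij; exact: enum_rank_bij.
  under eq_bigr do rewrite !mxE /ej enum_rankK.
  by rewrite sum_dlt dlt_pt (inj_eq enum_val_inj).
have : (N <= #|S|)%N.
  rewrite -{1}[N](@mxrank1 F N) -eI.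
  apply: leq_trans (mxrankM_maxl _ _) _; rewrite eM.
  apply: leq_trans (mxrankM_maxr _ _) _; exact: rank_leq_row.
by rewrite /N card_ffun !card_ord.
Qed.

Theorem corollary8p2 (F : finFieldType) (G : {set F}) (m k d d' : nat)
  (hd' : (2 * (#|G| - 1) <= d')%N) (S : {set 'rV[F]_(m + k)}) :
  (exists (c : 'rV[F]_m -> F) (dq : 'rV[F]_(m + k) -> F),
     (forall Z : ipoly F m k d d',
        \sum_(alpha : 'rV[F]_m) c alpha * Gsum G Z alpha
        = \sum_(q in S) dq q * peval Z q)
     /\ (exists Z' : ipoly F m k d d',
           \sum_(alpha : 'rV[F]_m) c alpha * Gsum G Z' alpha != 0)) ->
  (#|G| ^ k <= #|S|)%N.
Proof.
case=> c [dq [hi [Z' hZ']]].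
pose Wy (y : 'rV[F]_k) := fun ex : {ffun 'I_m -> 'I_d.+1} =>
  \sum_(ey : {ffun 'I_k -> 'I_d'.+1}) Z' (ex, ey) * \prod_j y ord0 j ^+ ey j.
have [y hy] : exists y : 'rV[F]_k, \sum_(al : 'rV[F]_m) c al * Xev (Wy y) al != 0.
  apply/existsP; rewrite -negb_forall; apply: contra hZ' => /forallP h.
  rewrite /Gsum; under eq_bigr do rewrite big_distrr /=.
  rewrite exchange_big /= big1 // => y _.
  rewrite -[RHS](eqP (h y)); apply: eq_bigr => al _; rewrite peval_exp.
  by [].
exact: (key hd' hi hy).
Qed.
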